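(* For every $\lambda\in\mathbb{C}$, $$\det\left(\mathbf{P}_4^{-1}\mathbf{K}-\lambda I_{2m+n}\right)=(1-\lambda)^{2m}\det\left(B^{-1}H-\lambda I_n\right).$$ Consequently the eigenvalues of $\mathbf{P}_4^{-1}\mathbf{K}$ are $1$ with algebraic multiplicity (at least) $2m$ together with the eigenvalues of $B^{-1}H$ (counted with algebraic multiplicity).
   Context: Let $m,n\ge 1$. Let $R_u\in\mathbb{R}^{m\times m}$ be invertible, $R_z\in\mathbb{R}^{m\times n}$, $L_{uu}\in\mathbb{R}^{m\times m}$ symmetric, $L_{uz}\in\mathbb{R}^{m\times n}$, $L_{zu}:=L_{uz}^T$, $L_{zz}\in\mathbb{R}^{n\times n}$ symmetric, and $B\in\mathbb{R}^{n\times n}$ invertible. Write $R_u^{-T}:=(R_u^{-1})^T$. Define $L_{yy}:=L_{uz}-L_{uu}R_u^{-1}R_z$ and the reduced Hessian $H:=L_{zz}-L_{zu}R_u^{-1}R_z-R_z^TR_u^{-T}L_{uz}+R_z^TR_u^{-T}L_{uu}R_u^{-1}R_z$. The KKT matrix is $\mathbf{K}:=\begin{bmatrix} L_{uu} & L_{uz} & R_u^T\\ L_{zu} & L_{zz} & R_z^T\\ R_u & R_z & 0\end{bmatrix}$. The preconditioner is $\mathbf{P}_4:=\mathbf{K}_1\mathbf{K}_2$ where $\mathbf{K}_1=\begin{bmatrix} L_{uu}R_u^{-1} & 0 & I_m\\ L_{zu}R_u^{-1} & I_n & R_z^TR_u^{-T}\\ I_m & 0 & 0\end{bmatrix}$ and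 $\mathbf{K}_2=\begin{bmatrix} R_u & R_z & 0\\ 0 & B & 0\\ 0 & L_{yy} & R_u^T\end{bmatrix}$. *)

(* Defs.v *)
From HB Require Import structures.
From mathcomp Require Import all_boot all_order all_algebra.
From mathcomp Require Import complex.
Set Implicit Arguments. Unset Strict Implicit. Unset Printing Implicit Defensive.
Import Order.TTheory GRing.Theory Num.Theory.
Local Open Scope ring_scope.

Section Block3.
Variable R : pzRingType.
Definition block3_mx {p1 p2 p3 q1 q2 q3 : nat}
  (A11 : 'M[R]_(p1, q1)) (A12 : 'M[R]_(p1, q2)) (A13 : 'M[R]_(p1, q3))
  (A21 : 'M[R]_(p2, q1)) (A22 : 'M[R]_(p2, q2)) (A23 : 'M[R]_(p2, q3))
  (A31 : 'M[R]_(p3, q1)) (A32 : 'M[R]_(p3, q2)) (A33 : 'M[R]_(p3, q3))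
  : 'M[R]_(p1 + p2 + p3, q1 + q2 + q3) :=
  block_mx (block_mx A11 A12 A21 A22) (col_mx A13 A23) (row_mx A31 A32) A33.
End Block3.

Section KKT.
Context {R : comUnitRingType} {m n : nat}.
Implicit Types (Ru Luu : 'M[R]_m) (Rz Luz : 'M[R]_(m, n)) (Lzz B : 'M[R]_n).

Definition Lyy Ru Rz Luu Luz : 'M[R]_(m, n) := Luz - Luu *m invmx Ru *m Rz.
Definition redH Ru Rz Luu Luz Lzz : 'M[R]_n :=
  Lzz - Luz^T *m invmx Ru *m Rz - Rz^T *m (invmx Ru)^T *m Luz
      + Rz^T *m (invmx Ru)^T *m Luu *m invmx Ru *m Rz.

Definition KKT Ru Rz Luu Luz Lzz : 'M[R]_(m + n + m) :=
  block3_mx Luu   Luz Ru^T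
            Luz^T Lzz Rz^T
            Ru    Rz  0.
Definition K1 Ru Rz Luu Luz : 'M[R]_(m + n + m) :=
  block3_mx (Luu *m invmx Ru)   0     1%:M
            (Luz^T *m invmx Ru) 1%:M  (Rz^T *m (invmx Ru)^T)
            1%:M                0     0.
Definition K2 Ru Rz Luu Luz B : 'M[R]_(m + n + m) :=
  block3_mx Ru Rz                  0
            0  B                   0
            0  (Lyy Ru Rz Luu Luz) Ru^T.
Definition P4 Ru Rz Luu Luz B : 'M[R]_(m + n + m) :=
  K1 Ru Rz Luu Luz *m K2 Ru Rz Luu Luz B.
End KKT.

(* Main.v *)
Require Import Defs.
From HB Require Import structures.
From mathcomp Require Import all_boot all_order all_algebra.
From mathcomp Require Import complex.
From mathcomp Require Import ring.
Import Order.TTheory GRing.Theory Num.Theory.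
Local Open Scope ring_scope.

Lemma zh (V : zmodType) (x l y z : V) : x + (l - x - y + z) + (y - z) = l.
Proof. by rewrite -!addrA (addrC z) addrNK addNr addr0 addrCA subrr addr0. Qed.
Lemma zh2 (V : zmodType) (x l : V) : x + (l - x) = l.
Proof. by rewrite addrC addrNK. Qed.

Section Key.
Variable F : fieldType.
Variables m n : nat.
Implicit Types (Ru Luu : 'M[F]_m) (Rz Luz : 'M[F]_(m, n)) (Lzz B : 'M[F]_n).

Definition K1inv Ru Rz Luu Luz : 'M[F]_(m + n + m) :=
  block3_mx 0 0 1%:M
            (- (Rz^T *m (invmx Ru)^T)) 1%:M (Rz^T *m (invmx Ru)^T *m (Luu *m invmx Ru) - Luz^T *m invmx Ru)
            1%:M 0 (- (Luu *m invmx Ru)).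

Lemma K1_unit Ru Rz Luu Luz : K1 Ru Rz Luu Luz \in unitmx.
Proof.
have [] := @mulmx1_unit _ _ (K1 Ru Rz Luu Luz) (K1inv Ru Rz Luu Luz) => //.
rewrite /K1 /K1inv /block3_mx.
rewrite !(mulmx_block, mul_row_col, mul_col_row, mul_row_block, mul_block_col, mul_mx_row, mul_col_mx, mul_row_col).
rewrite !(mulmx0, mul0mx, mul1mx, mulmx1, addr0, add0r, add_col_mx, add_row_mx, add_block_mx).
rewrite !scalar_mx_block addNr subrr mulmxN row_mx0.
have -> : forall a b : 'M[F]_(n, m), a + (b - a) - b = 0.
  by move=> a b; rewrite addrCA subrr addr0 subrr.
by rewrite col_mx0 -block_mxEv.
Qed.

Lemma KKT_fact Ru Rz Luu Luz Lzz : Ru \in unitmx ->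
  KKT Ru Rz Luu Luz Lzz = K1 Ru Rz Luu Luz *m K2 Ru Rz Luu Luz (redH Ru Rz Luu Luz Lzz).
Proof.
move=> uRu.
rewrite /K1 /K2 /KKT /block3_mx.
rewrite !(mulmx_block, mul_row_col, mul_col_row, mul_row_block, mul_block_col, mul_mx_row, mul_col_mx, mul_row_col).
rewrite !(mulmx0, mul0mx, mul1mx, mulmx1, addr0, add0r, add_col_mx, add_row_mx, add_block_mx).
rewrite trmx_inv !mulmxKV ?unitmx_tr //.
congr block_mx; rewrite block_mxEv; congr col_mx; congr row_mx.
  by rewrite /Lyy zh2.
rewrite /redH /Lyy mulmxBr !mulmxA -trmx_inv.
by rewrite zh.
Qed.

Lemma char_pencil p (U V : 'M[F]_p) : U \in unitmx ->
  (\det U)%:P * char_poly (invmx U *m V) =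
  \det ('X *: map_mx polyC U - map_mx polyC V).
Proof.
move=> uU; rewrite /char_poly /char_poly_mx -det_map_mx -det_mulmx.
by rewrite mulmxBr mul_mx_scalar -map_mxM mulKVmx.
Qed.

Lemma det_K2 Ru Rz Luu Luz B :
  \det (K2 Ru Rz Luu Luz B) = \det Ru ^+ 2 * \det B.
Proof.
rewrite /K2 /block3_mx col_mx0 det_lblock det_ublock det_tr.
by rewrite expr2 mulrAC.
Qed.

Lemma det_pencil Ru Rz Luu Luz B G :
  \det ('X *: map_mx polyC (K2 Ru Rz Luu Luz B) - map_mx polyC (K2 Ru Rz Luu Luz G))
  = ('X - 1) ^+ (2 * m) * (\det Ru ^+ 2)%:P * \det ('X *: map_mx polyC B - map_mx polyC G).
Proof.
rewrite /K2 /block3_mx.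
rewrite !(map_block_mx, map_col_mx, map_row_mx, map_mx0, scale_block_mx, scale_col_mx, scale_row_mx, scaler0, opp_block_mx, opp_col_mx, opp_row_mx, oppr0, add_block_mx, add_col_mx, add_row_mx, addr0, col_mx0).
rewrite det_lblock det_ublock.
have h : forall p (A : 'M[{poly F}]_p), 'X *: A - A = ('X - 1) *: A.
  by move=> p A; rewrite scalerBl scale1r.
rewrite !h !detZ -map_trmx det_tr !det_map_mx rmorphXn.
rewrite mul2n -addnn exprD; ring.
Qed.
End Key.

Lemma det_shift (K : comNzRingType) p (A : 'M[K]_p) (x : K) :
  \det (A - x%:M) = (-1) ^+ p * (char_poly A).[x].
Proof.
have -> : (char_poly A).[x] = \det (x%:M - A).
  rewrite /char_poly; transitivity (horner_eval x (\det (char_poly_mx A))) => //.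
  rewrite -det_map_mx; congr (\det _).
  apply/matrixP => i j; rewrite !mxE /horner_eval.
  by rewrite rmorphB rmorphMn /= !horner_evalE hornerX hornerC.
by rewrite -[A - _]opprB -scaleN1r detZ.
Qed.

Theorem mainTheorem6 (R : rcfType) (m n : nat) (Hm : (0 < m)%N) (Hn : (0 < n)%N)
  (Ru : 'M[R]_m) (Rz : 'M[R]_(m, n)) (Luu : 'M[R]_m) (Luz : 'M[R]_(m, n))
  (Lzz : 'M[R]_n) (B : 'M[R]_n) :
  Ru \in unitmx -> Luu^T = Luu -> Lzz^T = Lzz -> B \in unitmx ->
  let M := invmx (P4 Ru Rz Luu Luz B) *m KKT Ru Rz Luu Luz Lzz in
  let S := invmx B *m redH Ru Rz Luu Luz Lzz in
  (forall lambda : R[i],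
     \det (map_mx (real_complex R) M - lambda%:M)
     = (1 - lambda) ^+ (2 * m) * \det (map_mx (real_complex R) S - lambda%:M))
  /\ char_poly M = ('X - 1) ^+ (2 * m) * char_poly S.
Proof.
move=> uRu _ _ uB M S.
set H := redH Ru Rz Luu Luz Lzz.
set K2B := K2 Ru Rz Luu Luz B.
set K2H := K2 Ru Rz Luu Luz H.
set K1m := K1 Ru Rz Luu Luz.
have dRu : \det Ru != 0 by rewrite -unitfE.
have dB : \det B != 0 by rewrite -unitfE.
have dK2 : \det K2B != 0 by rewrite /K2B det_K2 mulf_neq0 ?expf_neq0.
have uK2 : K2B \in unitmx by rewrite unitmxE unitfE.
have uK1 : K1m \in unitmx by apply: K1_unit.
have hinv : invmx (P4 Ru Rz Luu Luz B) = invmx K2B *m invmx K1m.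
  have hPX : P4 Ru Rz Luu Luz B *m (invmx K2B *m invmx K1m) = 1%:M.
    by rewrite /P4 -/K1m -/K2B -mulmxA (mulmxA K2B) mulmxV // mul1mx mulmxV.
  have uP : P4 Ru Rz Luu Luz B \in unitmx by case: (mulmx1_unit hPX).
  by rewrite -[LHS]mulmx1 -hPX mulmxA mulVmx // mul1mx.
have hM : M = invmx K2B *m K2H.
  by rewrite /M hinv KKT_fact // -/K1m -/K2H -mulmxA mulKmx.
have hchar : char_poly M = ('X - 1) ^+ (2 * m) * char_poly S.
  apply: (@mulfI _ (\det K2B)%:P); first by rewrite polyC_eq0.
  rewrite hM char_pencil // det_pencil -char_pencil //.
  rewrite /K2B det_K2 !rmorphM /= -/S !mulrA; congr (_ * _).
  by rewrite [RHS]mulrC !mulrA.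
split => // lambda.
rewrite !det_shift -!map_char_poly hchar rmorphM rmorphXn /= rmorphB /= map_polyX map_polyC /=.
rewrite hornerM horner_exp hornerD hornerN hornerX hornerC rmorph1.
rewrite -(opprB lambda) exprNn mul2n -addnn !exprD !expr1n !(exprNn (lambda - 1)).
set c := (map_poly _ _).[lambda]; ring.
Qed.
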